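(* Let $n\in\mathbb N$. (a) If $a_{\mathbf P}:(0,\infty)\to\mathbb R$, $\mathbf P\in\mathbf{Part}(n)$, are functions such that $\sum_{\mathbf P\in\mathbf{Part}(n)}a_{\mathbf P}(\|\mu\|)(\tau^{\mathbf P}_I)_\mu=0$ for all finite sets $I$ and all $\mu\in\mathcal M_+(I)$, then $a_{\mathbf P}\equiv0$ for all $\mathbf P$. (b) If $c_{\mathbf P}\in\mathbb R$, for $\mathbf P=\{P_1,\dots,P_l\}\in\mathbf{Part}(n)$ with $|P_i|\ge2$ for all $i$, are constants such that $\sum_{\mathbf P}c_{\mathbf P}\tau^{\mathbf P}_I=0$ when restricted to $\mathcal P_+(I)$ (i.e. at points of $\mathcal P_+(I)$ and on tangent vectors in $\mathcal S_0(I)$) for all finite sets $I$, then $c_{\mathbf P}=0$ for all $\mathbf P$. In other words, the functions $a_{\mathbf P}$ and the constants $c_{\mathbf P}$ in such representations are uniquely determined.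
   Context: $\mathbf{Part}(n)$ is the set of partitions of $\{1,\dots,n\}$. For a finite set $I$: $\mathcal S(I)=\{\sum_{i\in I}x_i\delta_i\}$, $\|\sum x_i\delta_i\|=\sum|x_i|$, $\mathcal M_+(I)=\{\sum\mu_i\delta_i:\mu_i>0\}$, $\mathcal P_+(I)=\{\mu\in\mathcal M_+(I):\sum\mu_i=1\}$, $\mathcal S_0(I)=\{\sum x_i\delta_i:\sum x_i=0\}$. For $\mu=\sum\mu_i\delta_i\in\mathcal M_+(I)$ and $V_k=\sum_iV^i_k\delta_i\in\mathcal S(I)$, $(\tau^m_I)_\mu(V_1,\dots,V_m)=\sum_i\mu_i^{1-m}V_1^i\cdots V_m^i$, and for $\mathbf P=\{P_1,\dots,P_l\}\in\mathbf{Part}(n)$, $(\tau^{\mathbf P}_I)_\mu(V_1,\dots,V_n)=\prod_{i=1}^l(\tau^{|P_i|}_I)_\mu((V_j)_{j\in P_i})$. *)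

(* Defs.v *)
From HB Require Import structures.
From mathcomp Require Import all_boot all_order all_algebra.
From mathcomp Require Import reals.
Set Implicit Arguments. Unset Strict Implicit. Unset Printing Implicit Defensive.
Import Order.TTheory GRing.Theory Num.Theory.
Local Open Scope ring_scope.

Definition is_part (n : nat) (P : {set {set 'I_n}}) : bool :=
  partition P [set: 'I_n].

Definition is_part_ge2 (n : nat) (P : {set {set 'I_n}}) : bool :=
  is_part P && [forall B in P, 1 < #|B|]%N.

Definition snorm (R : realType) (I : finType) (mu : I -> R) : R :=
  \sum_(i : I) `|mu i|.

Definition tau_m (R : realType) (I : finType) (n : nat) (B : {set 'I_n})
    (mu : I -> R) (V : 'I_n -> I -> R) : R :=
  \sum_(i : I) mu i ^ (1 - (#|B|)%:Z) * \prod_(j in B) V j i.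

Definition tauP (R : realType) (I : finType) (n : nat) (P : {set {set 'I_n}})
    (mu : I -> R) (V : 'I_n -> I -> R) : R :=
  \prod_(B in P) tau_m B mu V.

(* Main.v *)
Require Import Defs.
From HB Require Import structures.
From mathcomp Require Import all_boot all_order all_algebra.
From mathcomp Require Import reals.
From mathcomp Require Import lra.
Import Order.TTheory GRing.Theory Num.Theory.
Set Implicit Arguments. Unset Strict Implicit.
Local Open Scope ring_scope.


Section Tri.
Variable n : nat.
Implicit Types P Q : {set {set 'I_n}}.

Definition refines P Q := [forall x, forall y,
  (pblock P x == pblock P y) ==> (pblock Q x == pblock Q y)].
Definition relset P := [set p : 'I_n * 'I_n | pblock P p.1 == pblock P p.2].
Definition msr P := #|relset P|.

Lemma part_eq P Q : is_part P -> is_part Q -> relset P = relset Q -> P = Q.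
Proof.
move=> hP hQ e.
rewrite -(preim_partition_pblock hP) -(preim_partition_pblock hQ).
rewrite /preim_partition /equivalence_partition.
apply: eq_imset => x; apply/setP => y; rewrite !inE /=.
by have := congr1 (fun S : {set _} => (x, y) \in S) e; rewrite /= !inE.
Qed.

Lemma refines_lt P Q : is_part P -> is_part Q -> refines P Q -> P != Q ->
  (msr P < msr Q)%N.
Proof.
move=> hP hQ /forallP r neq; apply: proper_card; rewrite properEneq; apply/andP; split.
  by apply: contra neq => /eqP e; apply/eqP; apply: part_eq.
apply/subsetP => -[x y]; rewrite !inE /= => h.
by have /forallP/(_ y)/implyP := r x; apply.
Qed.

Lemma triang (R : numDomainType) (F : pred {set {set 'I_n}}) (x : {set {set 'I_n}} -> R)
  (T : {set {set 'I_n}} -> {set {set 'I_n}} -> R) :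
  (forall P, F P -> is_part P) ->
  (forall Q, F Q -> \sum_(P | F P) x P * T Q P = 0) ->
  (forall Q P, F Q -> F P -> T Q P != 0 -> refines P Q) ->
  (forall Q, F Q -> T Q Q != 0) ->
  forall Q, F Q -> x Q = 0.
Proof.
move=> hF hs hr hd.
suff H : forall k Q, (msr Q < k)%N -> F Q -> x Q = 0.
  by move=> Q; apply: (H (msr Q).+1).
elim=> [//|k IH] Q lt FQ.
have := hs Q FQ; rewrite (bigD1 Q) //= big1 ?addr0.
  by move/eqP; rewrite mulf_eq0 (negbTE (hd Q FQ)) orbF => /eqP.
move=> P /andP[FP nPQ].
have [->|nz] := eqVneq (T Q P) 0; first by rewrite mulr0.
rewrite (IH P) ?mul0r //.
have := @refines_lt P Q (hF P FP) (hF Q FQ) (hr Q P FQ FP nz) nPQ.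
by move=> h; apply: leq_trans h _.
Qed.
End Tri.


Section Comp.
Variables (R : realType) (n : nat).
Implicit Types P Q : {set {set 'I_n}}.
Local Notation I := ('I_3 * {set 'I_n})%type.

Definition VV (v : 'I_3 -> R) Q : 'I_n -> I -> R :=
  fun j i => v i.1 * (i.2 == pblock Q j)%:R.

Definition HH Q (B : {set 'I_n}) : R :=
  \sum_(S : {set 'I_n}) \prod_(j in B) (S == pblock Q j)%:R.

Lemma sum_eq1 (X : {set 'I_n}) : \sum_(S : {set 'I_n}) (S == X)%:R = 1 :> R.
Proof.
rewrite (bigD1 X) //= eqxx big1 ?addr0 // => S /negbTE ->; by [].
Qed.

Lemma tau_m_VV (v : 'I_3 -> R) (w : R) Q (B : {set 'I_n}) :
  tau_m B (fun _ : I => w) (VV v Q) =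
  w ^ (1 - #|B|%:Z) * (\sum_b v b ^+ #|B|) * HH Q B.
Proof.
rewrite /tau_m /HH -(pair_bigA _ (fun b S =>
   w ^ (1 - #|B|%:Z) * \prod_(j in B) VV v Q j (b, S))) /=.
rewrite -mulrA mulr_suml mulr_sumr; apply: eq_bigr => b _.
rewrite !mulr_sumr; apply: eq_bigr => S _.
by rewrite /VV /= big_split /= prodr_const.
Qed.

Lemma tauP_VV (v : 'I_3 -> R) (w : R) Q P :
  tauP P (fun _ : I => w) (VV v Q) =
  \prod_(B in P) (w ^ (1 - #|B|%:Z) * (\sum_b v b ^+ #|B|) * HH Q B).
Proof. by rewrite /tauP; apply: eq_bigr => B _; rewrite tau_m_VV. Qed.

Lemma HH_ref P Q B : is_part P -> refines P Q -> B \in P -> HH Q B = 1.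
Proof.
move=> hP /forallP r BP.
have [/eqP cov tI n0] := and3P hP.
have /set0Pn [j0 j0B] : B != set0 by apply: (partition_neq0 hP).
have eB j : j \in B -> pblock Q j = pblock Q j0.
  move=> jB; apply/eqP; have /forallP/(_ j0)/implyP := r j; apply.
  by rewrite (def_pblock tI BP jB) (def_pblock tI BP j0B).
rewrite /HH (bigD1 (pblock Q j0)) //=.
have -> : \prod_(j in B) (pblock Q j0 == pblock Q j)%:R = 1 :> R.
  by apply: big1 => j jB; rewrite eB // eqxx.
rewrite (eq_bigr (fun _ => 0)) ?big1 ?addr0 // => S nS.
by rewrite (bigD1 j0) //= (negbTE nS) mul0r.
Qed.

Lemma HH_nz_ref P Q : is_part P -> (forall B, B \in P -> HH Q B != 0) ->
  refines P Q.
Proof.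
move=> hP h; have [/eqP cov tI n0] := and3P hP.
apply/forallP => x; apply/forallP => y; apply/implyP => /eqP exy.
have xc : x \in cover P by rewrite cov inE.
have yc : y \in cover P by rewrite cov inE.
have := h _ (pblock_mem xc); rewrite /HH => hsum.
case: (pickP [pred S : {set 'I_n} | \prod_(j in pblock P x) (S == pblock Q j)%:R != (0:R)]) => [S nzS | hh]; last first.
  by move: hsum; rewrite big1 ?eqxx // => S _; have := hh S; rewrite /= => /negbFE/eqP.
move: nzS => /= /prodf_neq0 hS.
have hx := hS x; have hy := hS y.
rewrite mem_pblock xc in hx; rewrite exy mem_pblock yc in hy.
have ex : S == pblock Q x by move: (hx isT); rewrite pnatr_eq0 eqb0 negbK.
have ey : S == pblock Q y by move: (hy isT); rewrite pnatr_eq0 eqb0 negbK.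
by rewrite -(eqP ex) -(eqP ey).
Qed.

End Comp.


Section Fin.
Variables (R : realType) (n : nat).
Implicit Types P Q : {set {set 'I_n}}.
Local Notation I := ('I_3 * {set 'I_n})%type.

Lemma tau_ref (v : 'I_3 -> R) (w : R) P Q : is_part P ->
  tauP P (fun _ : I => w) (VV v Q) != 0 -> refines P Q.
Proof.
move=> hP; rewrite tauP_VV => /prodf_neq0 h.
apply: (@HH_nz_ref R) => // B BP; have := h B BP.
by rewrite mulf_eq0 negb_or => /andP[_].
Qed.

Lemma tau_diag (v : 'I_3 -> R) (w : R) Q : is_part Q -> w != 0 ->
  (forall B, B \in Q -> \sum_b v b ^+ #|B| != 0) ->
  tauP Q (fun _ : I => w) (VV v Q) != 0.
Proof.
move=> hQ w0 hg; rewrite tauP_VV; apply/prodf_neq0 => B BQ.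
have rQ : refines Q Q by apply/forallP => x; apply/forallP => y; apply/implyP.
by rewrite (@HH_ref R _ _ _ _ hQ rQ BQ) mulr1 mulf_neq0 ?expfz_neq0 ?hg.
Qed.

Lemma cardI_gt0 : (0 < #|{: I}|)%N.
Proof. by apply/card_gt0P; exists (ord0, set0). Qed.

Lemma sum_const_w (t : R) : \sum_(i : I) (t / #|{: I}|%:R) = t.
Proof.
rewrite sumr_const (_ : #|xpredT| = #|{: I}|) // -[_ *+ _]mulr_natr divfK //.
by rewrite pnatr_eq0 -lt0n cardI_gt0.
Qed.

Lemma w_pos (t : R) : 0 < t -> 0 < t / #|{: I}|%:R.
Proof. by move=> ht; rewrite divr_gt0 // ltr0n cardI_gt0. Qed.

Lemma card_blk P B : is_part P -> B \in P -> (0 < #|B|)%N.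
Proof.
move=> hP BP; rewrite card_gt0; exact: (partition_neq0 hP BP).
Qed.

End Fin.


Theorem lemma4p2 (R : realType) (n : nat) :
  (* (a) *)
  (forall a : {set {set 'I_n}} -> R -> R,
    (forall (I : finType) (mu : I -> R), (forall i, 0 < mu i) ->
       forall V : 'I_n -> I -> R,
       \sum_(P | is_part P) a P (snorm mu) * tauP P mu V = 0) ->
    forall P, is_part P -> forall t : R, 0 < t -> a P t = 0)
  /\
  (* (b) *)
  (forall c : {set {set 'I_n}} -> R,
    (forall (I : finType) (mu : I -> R), (forall i, 0 < mu i) ->
       \sum_(i : I) mu i = 1 ->
       forall V : 'I_n -> I -> R, (forall j, \sum_(i : I) V j i = 0) ->
       \sum_(P | is_part_ge2 P) c P * tauP P mu V = 0) ->
    forall P, is_part_ge2 P -> c P = 0).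
Proof.
pose Ity := ('I_3 * {set 'I_n})%type.
split.
- move=> a ha P hP t ht.
  pose w : R := t / #|{: Ity}|%:R.
  have wp : 0 < w by apply: w_pos.
  pose v1 : 'I_3 -> R := fun b => (b == ord0)%:R.
  apply: (@triang n R (@is_part n) (fun P => a P t)
     (fun Q P => tauP P (fun _ : Ity => w) (VV v1 Q))) => //.
  + move=> Q hQ; have := ha Ity (fun _ => w) (fun _ => wp) (VV v1 Q).
    have -> : snorm (fun _ : Ity => w) = t.
      by rewrite /snorm (eq_bigr (fun _ => w)) ?sum_const_w // => i _; rewrite gtr0_norm.
    by [].
  + by move=> Q P' _ hP'; apply: tau_ref.
  + move=> Q hQ; apply: tau_diag => //; first by rewrite gt_eqF.
    move=> B BQ; rewrite (bigD1 ord0) //= /v1 eqxx expr1n big1 ?addr0 ?oner_neq0 //.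
    move=> b /negbTE ->; rewrite expr0n; case: eqP => // /eqP.
    by rewrite eqn0Ngt (card_blk hQ BQ).
- move=> c hc P hP.
  pose w : R := 1 / #|{: Ity}|%:R.
  have wp : 0 < w by apply: w_pos.
  pose v2 : 'I_3 -> R := fun b => if (val b == 0)%N then 2 else -1.
  have hv k : \sum_b v2 b ^+ k = 2 ^+ k + (-1) ^+ k + (-1) ^+ k.
    by rewrite !big_ord_recl big_ord0 addr0 /= addrA.
  have hF : forall P : {set {set 'I_n}}, is_part_ge2 P -> is_part P.
    by move=> P' hP'; case/andP: hP'.
  apply: (@triang n R (@is_part_ge2 n) c
     (fun Q P => tauP P (fun _ : Ity => w) (VV v2 Q))) => //.
  + move=> Q hQ; apply: hc.
    * by move=> _; apply: wp.
    * exact: sum_const_w.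
    * move=> j; rewrite /VV.
      rewrite -(pair_bigA _ (fun b S => v2 b * (S == pblock Q j)%:R)) /=.
      rewrite (eq_bigr (fun b => v2 b)); last by move=> b _; rewrite -mulr_sumr sum_eq1 mulr1.
      have := hv 1%N; rewrite !expr1 => ->. 
      lra.
  + by move=> Q P' _ hP'; apply: tau_ref; apply: hF.
  + move=> Q hQ; apply: tau_diag => //; first exact: hF.
      by rewrite gt_eqF.
    move=> B BQ; rewrite hv.
    have : (1 < #|B|)%N by case/andP: hQ => _ /forall_inP; apply.
    case: #|B| => [|[|m]] // _.
    rewrite !exprS -signr_odd; case: (odd m) => /=; rewrite ?expr1 ?expr0.
    * have : 1 <= 2 ^+ m :> R by apply: exprn_ege1; lra.
      move=> h; apply/eqP => e; lra.
    * have : 1 <= 2 ^+ m :> R by apply: exprn_ege1; lra.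
      move=> h; apply/eqP => e; lra.
Qed.
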